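(* Let $a,c,p\in\mathbb{C}$ with $-c\notin\mathbb{N}\cup\{0\}$. Define sequences $(u_n)_{n\ge0}$ and $(v_n)_{n\ge0}$ by $u_0=1$, $u_1=\frac{a}{c}+p$, $v_0=1$, $v_1=\frac{a}{c}-p$ and, for all integers $n\ge1$, \[ u_{n+1}=\frac{a+p(c+2n)+n}{(n+1)(c+n)}u_n-\frac{p(p+1)}{(n+1)(c+n)}u_{n-1}, \] \[ v_{n+1}=\frac{a-p(c+2n)+n}{(n+1)(c+n)}v_n-\frac{(p-1)p}{(n+1)(c+n)}v_{n-1}. \] Then \[ \sinh(pz)\,M(a,c;z)=\sum_{n=0}^\infty\frac{u_n-v_n}{2}z^n,\qquad z\in\mathbb{C}. \]
   Context: For $a\in\mathbb{C}$, $(a)_n=a(a+1)\cdots(a+n-1)$ denotes the Pochhammer symbol, with $(a)_0=1$. For $a,c\in\mathbb{C}$ with $-c\notin\mathbb{N}\cup\{0\}$, the confluent hypergeometric (Kummer) function is $M(a,c;z)=\sum_{n=0}^\infty \frac{(a)_n}{(c)_n\,n!}z^n$, $z\in\mathbb{C}$. *)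

(* Defs.v *)
From Stdlib Require Import Reals Factorial.
From Coquelicot Require Import Coquelicot.
Open Scope C_scope.

(* Sum of a complex series (componentwise Coquelicot [Series]; equals the
   true sum whenever the series converges). *)
Definition CSeries (f : nat -> C) : C :=
  (Series (fun n => Re (f n)), Series (fun n => Im (f n))).

Fixpoint poch (a : C) (n : nat) : C :=
  match n with
  | O => 1
  | S k => poch a k * (a + INR k)
  end.

(* Kummer's confluent hypergeometric function M(a,c;z) as the sum of its
   power series (the series converges for every z when -c is not in N u {0}). *)
Definition kummerM (a c z : C) : C :=
  CSeries (fun n : nat => poch a n / (poch c n * INR (Factorial.fact n)) * z ^ n).

Definition cexp (z : C) : C := CSeries (fun n : nat => z ^ n / INR (Factorial.fact n)).
Definition csinh (z : C) : C := (cexp z - cexp (- z)) / 2.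

(* Three-term recurrence: rec x0 x1 A B n = x_n where
   x_0 = x0, x_1 = x1, x_{m+1} = A m * x_m - B m * x_{m-1} for m >= 1. *)
Fixpoint rec_pair (x0 x1 : C) (A B : nat -> C) (n : nat) : C * C :=
  match n with
  | O => (x0, x1)
  | S k => let (x, y) := rec_pair x0 x1 A B k in
           (y, A (S k) * y - B (S k) * x)
  end.
Definition rec3 (x0 x1 : C) (A B : nat -> C) (n : nat) : C :=
  fst (rec_pair x0 x1 A B n).

Definition u_seq (a c p : C) : nat -> C :=
  rec3 1 (a / c + p)
    (fun n => (a + p * (c + 2 * INR n) + INR n) / (INR (n + 1) * (c + INR n)))
    (fun n => p * (p + 1) / (INR (n + 1) * (c + INR n))).

Definition v_seq (a c p : C) : nat -> C :=
  rec3 1 (a / c - p)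
    (fun n => (a - p * (c + 2 * INR n) + INR n) / (INR (n + 1) * (c + INR n)))
    (fun n => (p - 1) * p / (INR (n + 1) * (c + INR n))).

(* Main.v *)
Require Import Defs.
From Stdlib Require Import Reals Lia Lra Factorial ZArith.
From Coquelicot Require Import Coquelicot.
Open Scope C_scope.

Fixpoint sumC (f : nat -> C) (n : nat) : C :=
  match n with O => f O | S m => sumC f m + f (S m) end.

Lemma sumC_ext f g n : (forall k, (k <= n)%nat -> f k = g k) -> sumC f n = sumC g n.
Proof.
  induction n; intros H; simpl.
  - apply H; lia.
  - rewrite IHn by (intros; apply H; lia). rewrite H by lia. reflexivity.
Qed.

Lemma sumC_lin x y f g n :
  sumC (fun k => x * f k + y * g k) n = x * sumC f n + y * sumC g n.
Proof. induction n; simpl; [ring|rewrite IHn; ring]. Qed.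

Lemma sumC_plus f g n :
  sumC (fun k => f k + g k) n = sumC f n + sumC g n.
Proof. induction n; simpl; [ring|rewrite IHn; ring]. Qed.

Lemma sumC_scal x f n : sumC (fun k => x * f k) n = x * sumC f n.
Proof. induction n; simpl; [ring|rewrite IHn; ring]. Qed.

Lemma sumC_shift f n : sumC f (S n) = f O + sumC (fun i => f (S i)) n.
Proof. induction n; simpl in *; [ring| rewrite IHn; ring]. Qed.

Lemma sumC_S f n : sumC f (S n) = sumC f n + f (S n).
Proof. reflexivity. Qed.

Lemma INR_S_C n : RtoC (INR (S n)) = RtoC (INR n) + 1.
Proof. rewrite S_INR, RtoC_plus; reflexivity. Qed.

Lemma INR_minus_C n k : (k <= n)%nat -> RtoC (INR (n - k)) = RtoC (INR n) - RtoC (INR k).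
Proof. intros; rewrite minus_INR by lia; apply RtoC_minus. Qed.

Definition w (al be : nat -> C) n := sumC (fun k => al k * be (n - k)%nat) n.

Lemma term1 (al be : nat -> C) (a c : C) (hal : forall k, RtoC (INR (S k)) * (RtoC (INR (S k)) + c - 1) * al (S k)
   = (RtoC (INR k) + a) * al k) n : sumC (fun k => RtoC (INR k) * (RtoC (INR k) + c - 1) * al k * be (S n - k)%nat) (S n)
  = sumC (fun i => (RtoC (INR i) + a) * al i * be (n - i)%nat) n.
Proof.
  rewrite sumC_shift. simpl INR at 1. rewrite Cmult_0_l, !Cmult_0_l, Cplus_0_l.
  apply sumC_ext. intros k _. simpl (S n - S k)%nat. rewrite hal. reflexivity.
Qed.

Lemma term2 (be : nat -> C) (q : C) (hbe : forall j, RtoC (INR (S j)) * be (S j) = q * be j) (H : nat -> C) n : sumC (fun k => RtoC (INR (S n - k)) * (H k * be (S n - k)%nat)) (S n)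
  = q * sumC (fun k => H k * be (n - k)%nat) n.
Proof.
  rewrite sumC_S. cbv beta. rewrite Nat.sub_diag. change (INR 0) with 0%R. rewrite Cmult_0_l, Cplus_0_r.
  rewrite <- sumC_scal. apply sumC_ext. intros k Hk.
  replace (S n - k)%nat with (S (n - k)) by lia.
  transitivity (H k * (RtoC (INR (S (n - k))) * be (S (n - k)))); [ring|rewrite hbe; ring].
Qed.

Lemma core (al be : nat -> C) (a c q : C) (hal : forall k, RtoC (INR (S k)) * (RtoC (INR (S k)) + c - 1) * al (S k)
   = (RtoC (INR k) + a) * al k) (hbe : forall j, RtoC (INR (S j)) * be (S j) = q * be j) m (n := S m) :
  RtoC (INR (S n)) * (RtoC (INR n) + c) * w al be (S n)
  = (a + q * (c + 2 * RtoC (INR n)) + RtoC (INR n)) * w al be n - q * (q + 1) * w al be m.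
Proof.
  assert (E1 : RtoC (INR (S n)) * (RtoC (INR n) + c) * w al be (S n) =
     1 * sumC (fun k => RtoC (INR k) * (RtoC (INR k) + c - 1) * al k * be (S n - k)%nat) (S n)
   + 1 * sumC (fun k => RtoC (INR (S n - k)) * (((RtoC (INR n) + RtoC (INR k) + c) * al k) * be (S n - k)%nat)) (S n)).
  { rewrite <- sumC_lin. unfold w. rewrite <- sumC_scal. apply sumC_ext. intros k Hk.
    rewrite INR_minus_C by exact Hk. rewrite INR_S_C. ring. }
  rewrite E1, (term1 al be a c hal), (term2 be q hbe).
  assert (E2 : q * w al be m = sumC (fun k => RtoC (INR (n - k)) * (al k * be (n - k)%nat)) n).
  { unfold n. rewrite (term2 be q hbe). reflexivity. }
  transitivity ((a + q * (c + 2 * RtoC (INR n)) + RtoC (INR n)) * w al be n + (- (q + 1)) * (q * w al be m)); [|ring].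
  rewrite E2. unfold w.
  rewrite !Cmult_1_l. rewrite <- (sumC_scal q).
  rewrite <- (sumC_scal (a + q * (c + 2 * RtoC (INR n)) + RtoC (INR n))).
  rewrite <- (sumC_scal (- (q + 1))).
  rewrite <- !sumC_plus. apply sumC_ext. intros k Hk.
  rewrite INR_minus_C by exact Hk. ring.
Qed.

Lemma RtoC_neq0 x : x <> 0%R -> RtoC x <> 0.
Proof. intros Hx H. apply Hx. injection H. auto. Qed.

Lemma fact_C_neq0 k : RtoC (INR (fact k)) <> 0.
Proof. apply RtoC_neq0, INR_fact_neq_0. Qed.

Lemma cn_neq0 c k : (forall n : nat, c <> - INR n) -> c + RtoC (INR k) <> 0.
Proof. intros hc H. apply (hc k). replace c with ((c + RtoC (INR k)) - RtoC (INR k)) by ring.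
  rewrite H. ring. Qed.

Lemma poch_neq0 c k : (forall n : nat, c <> - INR n) -> poch c k <> 0.
Proof. intros hc. induction k; simpl.
  - apply RtoC_neq0. lra.
  - apply Cmult_neq_0; auto. apply (cn_neq0 c k hc).
Qed.

Lemma INR_fact_S_C k : RtoC (INR (fact (S k))) = RtoC (INR (S k)) * RtoC (INR (fact k)).
Proof. rewrite fact_simpl, mult_INR, RtoC_mult. reflexivity. Qed.

Definition alp a c k := poch a k / (poch c k * INR (fact k)).
Definition bet (q : C) j := q ^ j / INR (fact j).

Lemma hal a c (hc : forall n : nat, c <> - INR n) k :
  RtoC (INR (S k)) * (RtoC (INR (S k)) + c - 1) * alp a c (S k)
   = (RtoC (INR k) + a) * alp a c k.
Proof.
  unfold alp. rewrite INR_fact_S_C. simpl poch.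
  pose proof (poch_neq0 c k hc). pose proof (cn_neq0 c k hc).
  pose proof (fact_C_neq0 k).
  assert (RtoC (INR (S k)) <> 0) by (apply RtoC_neq0, not_0_INR; lia).
  rewrite INR_S_C in *. field. repeat split; auto.
Qed.

Lemma hbe q j : RtoC (INR (S j)) * bet q (S j) = q * bet q j.
Proof.
  unfold bet. rewrite INR_fact_S_C. simpl Cpow.
  pose proof (fact_C_neq0 j).
  assert (RtoC (INR (S j)) <> 0) by (apply RtoC_neq0, not_0_INR; lia).
  field. auto.
Qed.

Lemma rec_pair_eq x0 x1 A B (ww : nat -> C) :
  ww 0%nat = x0 -> ww 1%nat = x1 ->
  (forall n, (1 <= n)%nat -> ww (S n) = A n * ww n - B n * ww (n - 1)%nat) ->
  forall n, rec_pair x0 x1 A B n = (ww n, ww (S n)).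
Proof.
  intros H0 H1 HS n. induction n; simpl.
  - rewrite H0, H1; reflexivity.
  - rewrite IHn. f_equal. rewrite (HS (S n)) by lia. simpl (S n - 1)%nat.
    rewrite Nat.sub_0_r. reflexivity.
Qed.

Definition ww a c q := w (alp a c) (bet q).

Lemma ww_rec a c q (hc : forall n : nat, c <> - INR n) n : (1 <= n)%nat ->
  ww a c q (S n) = (a + q * (c + 2 * INR n) + INR n) / (INR (n + 1) * (c + INR n)) * ww a c q n
     - q * (q + 1) / (INR (n + 1) * (c + INR n)) * ww a c q (n - 1)%nat.
Proof.
  intros Hn. destruct n as [|m]; [lia|].
  pose proof (core (alp a c) (bet q) a c q (hal a c hc) (hbe q) m) as E.
  unfold ww. simpl (S m - 1)%nat. rewrite Nat.sub_0_r.
  rewrite Nat.add_1_r.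
  pose proof (cn_neq0 c (S m) hc).
  assert (RtoC (INR (S (S m))) <> 0) by (apply RtoC_neq0, not_0_INR; lia).
  assert (RtoC (INR (S m)) + c <> 0) by (rewrite Cplus_comm; auto).
  transitivity ((RtoC (INR (S (S m))) * (RtoC (INR (S m)) + c) * w (alp a c) (bet q) (S (S m)))
     / (RtoC (INR (S (S m))) * (RtoC (INR (S m)) + c))).
  - field. auto.
  - rewrite E. field. auto.
Qed.

Lemma ww0 a c q : ww a c q 0%nat = 1.
Proof. unfold ww, w, alp, bet. simpl. change (INR 1) with 1%R. field. Qed.

Lemma ww1 a c q (hc : forall n : nat, c <> - INR n) : ww a c q 1%nat = a / c + q.
Proof. unfold ww, w, alp, bet. simpl. change (INR 1) with 1%R. change (INR 0) with 0%R.
  pose proof (cn_neq0 c 0 hc). change (INR 0) with 0%R in H. rewrite Cplus_0_r in H.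
  field. auto. Qed.

Lemma u_ww a c p (hc : forall n : nat, c <> - INR n) n : u_seq a c p n = ww a c p n.
Proof.
  unfold u_seq, rec3. rewrite (rec_pair_eq _ _ _ _ (ww a c p)); auto.
  - apply ww0.
  - apply ww1; auto.
  - intros; apply ww_rec; auto.
Qed.

Lemma v_ww a c p (hc : forall n : nat, c <> - INR n) n : v_seq a c p n = ww a c (- p) n.
Proof.
  unfold v_seq, rec3. rewrite (rec_pair_eq _ _ _ _ (ww a c (- p))); auto.
  - apply ww0.
  - rewrite ww1; auto.
  - intros m Hm. rewrite ww_rec; auto.
    pose proof (cn_neq0 c m hc).
    assert (RtoC (INR (m + 1)) <> 0) by (apply RtoC_neq0, not_0_INR; lia).
    assert (RtoC (INR m) + c <> 0) by (rewrite Cplus_comm; auto).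
    field; repeat split; auto.
Qed.

Lemma sum_n_sumC (h : nat -> C) n : sum_n h n = sumC h n.
Proof. induction n. - rewrite sum_O; reflexivity. - rewrite sum_Sn, IHn. reflexivity. Qed.

Lemma Re_sumC h n : Re (sumC h n) = sum_f_R0 (fun k => Re (h k)) n.
Proof. induction n; simpl; [reflexivity| rewrite <- IHn; reflexivity]. Qed.
Lemma Im_sumC h n : Im (sumC h n) = sum_f_R0 (fun k => Im (h k)) n.
Proof. induction n; simpl; [reflexivity| rewrite <- IHn; reflexivity]. Qed.

Lemma is_series_C_parts (h : nat -> C) lr li :
  is_series (fun n => Re (h n)) lr -> is_series (fun n => Im (h n)) li -> is_series h (lr, li).
Proof.
  intros Hr Hi. unfold is_series in *.
  apply filterlim_locally. intros eps.
  apply (filterlim_locally _ lr) with (eps := eps) in Hr.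
  apply (filterlim_locally _ li) with (eps := eps) in Hi.
  generalize (filter_and _ _ Hr Hi). apply filter_imp. intros n [H1 H2].
  rewrite sum_n_sumC. rewrite sum_n_Reals, <- Re_sumC in H1. rewrite sum_n_Reals, <- Im_sumC in H2.
  split; assumption.
Qed.

Lemma ex_Re_abs (h : nat -> C) : ex_series (fun n => Cmod (h n)) -> ex_series (fun n => Rabs (Re (h n))).
Proof. intros H. apply (@ex_series_le R_AbsRing R_CompleteNormedModule _ (fun n => Cmod (h n))); auto.
  intros n. unfold norm; simpl. unfold abs; simpl. rewrite Rabs_Rabsolu. apply re_le_Cmod. Qed.

Lemma ex_Im_abs (h : nat -> C) : ex_series (fun n => Cmod (h n)) -> ex_series (fun n => Rabs (Im (h n))).
Proof. intros H. apply (@ex_series_le R_AbsRing R_CompleteNormedModule _ (fun n => Cmod (h n))); auto.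
  intros n. unfold norm; simpl. unfold abs; simpl. rewrite Rabs_Rabsolu. eapply Rle_trans; [apply Rmax_r|apply Rmax_Cmod]. Qed.

Lemma ex_abs_ex (b : nat -> R) : ex_series (fun n => Rabs (b n)) -> ex_series b.
Proof. intros H. apply (@ex_series_le R_AbsRing R_CompleteNormedModule _ (fun n => Rabs (b n))); auto.
  intros n. unfold norm; simpl. unfold abs; simpl. lra. Qed.

Lemma CSeries_correct (h : nat -> C) : ex_series (fun n => Cmod (h n)) -> is_series h (CSeries h).
Proof. intros H. apply is_series_C_parts; apply Series_correct; apply ex_abs_ex.
  apply ex_Re_abs; auto. apply ex_Im_abs; auto. Qed.

Lemma Cmult_series (f g : nat -> C) :
  ex_series (fun n => Cmod (f n)) -> ex_series (fun n => Cmod (g n)) ->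
  is_series (fun n => sumC (fun k => f k * g (n - k)%nat) n) (CSeries f * CSeries g).
Proof.
  intros Hf Hg.
  assert (Rf := Series_correct _ (ex_abs_ex _ (ex_Re_abs _ Hf))).
  assert (If := Series_correct _ (ex_abs_ex _ (ex_Im_abs _ Hf))).
  assert (Rg := Series_correct _ (ex_abs_ex _ (ex_Re_abs _ Hg))).
  assert (Ig := Series_correct _ (ex_abs_ex _ (ex_Im_abs _ Hg))).
  pose proof (ex_Re_abs _ Hf). pose proof (ex_Im_abs _ Hf).
  pose proof (ex_Re_abs _ Hg). pose proof (ex_Im_abs _ Hg).
  unfold CSeries. simpl.
  apply is_series_C_parts.
  - eapply is_series_ext; [|apply (is_series_minus _ _ _ _ (is_series_mult _ _ _ _ Rf Rg H H1) (is_series_mult _ _ _ _ If Ig H0 H2))].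
    intros n. simpl. rewrite Re_sumC. unfold plus, opp; simpl. rewrite minus_sum. reflexivity.
  - eapply is_series_ext; [|apply (is_series_plus _ _ _ _ (is_series_mult _ _ _ _ Rf Ig H H2) (is_series_mult _ _ _ _ If Rg H0 H1))].
    intros n. simpl. rewrite Im_sumC. unfold plus; simpl. rewrite <- plus_sum.
    apply sum_eq. intros k _. simpl. reflexivity.
Qed.

Lemma ex_series_ratio (b : nat -> R) N : (forall n, 0 <= b n)%R ->
  (forall n, (N <= n)%nat -> b (S n) <= / 2 * b n)%R -> ex_series b.
Proof.
  intros Hpos Hr. apply (ex_series_incr_n b N).
  assert (Hb : forall k, (b (N + k)%nat <= b N * (/ 2) ^ k)%R).
  { induction k. - rewrite Nat.add_0_r. simpl. lra.
    - rewrite Nat.add_succ_r. eapply Rle_trans; [apply Hr; lia|]. simpl.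
      assert (0 < /2)%R by lra. nra. }
  apply (@ex_series_le R_AbsRing R_CompleteNormedModule _ (fun k => b N * (/ 2) ^ k)%R).
  - intros k. unfold norm; simpl. unfold abs; simpl. rewrite Rabs_pos_eq; auto.
  - apply (ex_series_scal_l (K:=R_AbsRing) (V:=R_NormedModule) (b N) (fun k => (/2)^k)%R).
    apply ex_series_geom. rewrite Rabs_pos_eq; lra.
Qed.

Lemma exp_abs (x : C) : ex_series (fun n => Cmod (x ^ n / INR (fact n))).
Proof.
  pose proof (is_exp_Reals (Cmod x)) as H. unfold is_pseries in H.
  eapply ex_series_ext; [|eexists; exact H].
  intros n. simpl. rewrite Cmod_div by apply fact_C_neq0.
  rewrite Cmod_pow, Cmod_R, Rabs_pos_eq by apply pos_INR.
  unfold scal; simpl. unfold mult; simpl. rewrite pow_n_pow. unfold Rdiv. ring.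
Qed.

Definition kt (a c z : C) n := poch a n / (poch c n * INR (fact n)) * z ^ n.

Lemma kt_S a c z (hc : forall n : nat, c <> - INR n) n :
  kt a c z (S n) = kt a c z n * ((a + INR n) * z / ((c + INR n) * INR (S n))).
Proof.
  unfold kt. rewrite INR_fact_S_C. simpl poch. rewrite Cpow_S.
  pose proof (poch_neq0 c n hc). pose proof (cn_neq0 c n hc).
  pose proof (fact_C_neq0 n).
  assert (RtoC (INR (S n)) <> 0) by (apply RtoC_neq0, not_0_INR; lia).
  field; repeat split; auto.
Qed.

Lemma kummer_abs a c z (hc : forall n : nat, c <> - INR n) : ex_series (fun n => Cmod (kt a c z n)).
Proof.
  set (K := (Cmod c + 2 * Cmod z * (Cmod a + 1) + 1)%R).
  destruct (archimed K) as [HK _].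
  assert (HK0 : (0 < K)%R) by (unfold K; pose proof (Cmod_ge_0 c); pose proof (Cmod_ge_0 z);
     pose proof (Cmod_ge_0 a); nra).
  set (N := Z.to_nat (up K)).
  assert (HN : (K <= INR N)%R).
  { unfold N. rewrite INR_IZR_INZ, Z2Nat.id. lra. apply le_IZR. lra. }
  apply (ex_series_ratio _ N). { intros; apply Cmod_ge_0. }
  intros n Hn. rewrite kt_S by auto. rewrite Cmod_mult.
  assert (Ht : (K <= INR n)%R) by (eapply Rle_trans; [exact HN| apply le_INR; auto]).
  pose proof (Cmod_ge_0 c); pose proof (Cmod_ge_0 z); pose proof (Cmod_ge_0 a).
  pose proof (Cmod_ge_0 (kt a c z n)).
  assert (Ha : (Cmod (a + INR n) <= Cmod a + INR n)%R).
  { eapply Rle_trans; [apply Cmod_triangle|]. rewrite Cmod_R, Rabs_pos_eq by apply pos_INR. lra. }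
  assert (Hc : (INR n - Cmod c <= Cmod (c + INR n))%R).
  { assert (E : RtoC (INR n) = (c + INR n) + - c) by ring.
    pose proof (Cmod_triangle (c + INR n) (- c)). rewrite <- E, Cmod_opp, Cmod_R, Rabs_pos_eq in H3 by apply pos_INR. lra. }
  assert (Hr : (Cmod ((a + INR n) * z / ((c + INR n) * INR (S n))) <= / 2)%R).
  { rewrite Cmod_div, !Cmod_mult, Cmod_R, Rabs_pos_eq by (first [apply pos_INR|
      apply Cmult_neq_0; [apply cn_neq0; auto| apply RtoC_neq0, not_0_INR; lia]]).
    rewrite S_INR. unfold K in Ht.
    assert (Hd : (0 < Cmod (c + INR n))%R) by nra.
    pose proof (pos_INR n). apply Rle_div_l. nra.
    assert (Cmod (a + INR n) * Cmod z <= (Cmod a + INR n) * Cmod z)%R by nra.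
    assert ((Cmod a + INR n) * Cmod z <= (Cmod a + 1) * (INR n + 1) * Cmod z)%R by (assert (0 <= Cmod z * (Cmod a * INR n + 1))%R by (apply Rmult_le_pos; nra); nra).
    assert ((Cmod a + 1) * (INR n + 1) * Cmod z <= / 2 * ((INR n - Cmod c) * (INR n + 1)))%R.
    { assert (2 * Cmod z * (Cmod a + 1) <= INR n - Cmod c)%R by lra.
      assert (2 * Cmod z * (Cmod a + 1) * (INR n + 1) <= (INR n - Cmod c) * (INR n + 1))%R
        by (apply Rmult_le_compat_r; lra).
      lra. }
    assert ((INR n - Cmod c) * (INR n + 1) <= Cmod (c + INR n) * (INR n + 1))%R by (pose proof (pos_INR n); nra).
    nra. }
  nra.
Qed.

Lemma HW a c (hc : forall n : nat, c <> - INR n) z q :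
  is_series (fun n => ww a c q n * z ^ n) (kummerM a c z * cexp (q * z)).
Proof.
  pose proof (Cmult_series (kt a c z) (fun j => (q * z) ^ j / INR (fact j))
     (kummer_abs a c z hc) (exp_abs (q * z))) as H.
  change (kummerM a c z) with (CSeries (kt a c z)).
  change (cexp (q * z)) with (CSeries (fun j => (q * z) ^ j / INR (fact j))).
  eapply is_series_ext; [|exact H]. intros n. symmetry.
  unfold ww, w. rewrite Cmult_comm, <- sumC_scal. apply sumC_ext. intros k Hk.
  unfold kt, alp, bet. rewrite Cpow_mult_l.
  replace (z ^ n) with (z ^ k * z ^ (n - k)) by (rewrite <- Cpow_add_r; f_equal; lia).
  generalize (z ^ k) (z ^ (n - k)) (q ^ (n - k)) (poch a k / (poch c k * INR (fact k))) (INR (fact (n - k))). intros. unfold Cdiv. ring.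
Qed.

Theorem theorem2p2 (a c p : C) (hc : forall n : nat, c <> - INR n) (z : C) :
  is_series (fun n : nat => (u_seq a c p n - v_seq a c p n) / 2 * z ^ n)
            (csinh (p * z) * kummerM a c z).
Proof.
  pose proof (is_series_scal_l (/2) _ _ (is_series_minus _ _ _ _ (HW a c hc z p) (HW a c hc z (- p)))) as H.
  replace (csinh (p * z) * kummerM a c z) with
    (scal (/2) (plus (kummerM a c z * cexp (p * z)) (opp (kummerM a c z * cexp (- p * z))))).
  - eapply is_series_ext; [|exact H]. intros n. rewrite u_ww, v_ww by auto.
    unfold scal, plus, opp; simpl. unfold mult; simpl. field.
  - unfold csinh. replace (- (p * z)) with (- p * z) by ring.
    unfold scal, plus, opp; simpl. unfold mult; simpl. field.
Qed.
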